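(* Let $G=(K\cup I,E)$ be a split graph and let $L\subseteq K$, $J\subseteq I$ (possibly empty). Then $L\cup J$ is free in the vertex shelling antimatroid of $G$ if and only if either there is no edge between $L$ and $J$, or there exists a vertex $h\in J$ such that $L\subseteq N(h)$ and $N(J\setminus\{h\})\subseteq N(h)\setminus L$.
   Context: A split graph $G=(K\cup I,E)$ is a finite simple graph whose vertex set $V=K\cup I$ comes with a fixed partition into a clique $K$ and an independent set $I$. For $X\subseteq V$, $N(X)$ is the set of vertices of $V\setminus X$ adjacent to some vertex of $X$, and $N(v)=N(\{v\})$. A vertex is simplicial if its neighbours induce a clique. The vertex shelling antimatroid of $G$ is $(V,\mathcal{F})$ where $F\subseteq V$ is feasible iff there is an ordering $f_1,\dots,f_{|F|}$ of $F$ such that each $f_j$ is simplicial in $G$ minus $\{f_1,\dots,f_{j-1}\}$ (the empty set is feasible). The trace of $\mathcal{F}$ on $X\subseteq V$ is $\{F\cap X:F\in\mathcal{F}\}$, and $X$ is free if its trace equals $2^X$. *)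

(* Defs.v *)
From mathcomp Require Import all_boot.
Set Implicit Arguments. Unset Strict Implicit. Unset Printing Implicit Defensive.

Section SplitGraphs.
Variable T : finType.
Variable e : rel T.

Definition simple_graph : Prop := symmetric e /\ irreflexive e.

(* split graph with clique K and independent set I := ~: K *)
Definition split_graph (K : {set T}) : Prop :=
  simple_graph /\
  (forall x y, x \in K -> y \in K -> x != y -> e x y) /\
  (forall x y, x \notin K -> y \notin K -> ~~ e x y).

Definition nbhd (X : {set T}) : {set T} :=
  [set v | (v \notin X) && [exists x in X, e x v]].

Definition simplicial_in (X : {set T}) (v : T) : bool :=
  (v \notin X) &&
  [forall a, forall b,
     [&& a \notin X, b \notin X, a != b, e v a & e v b] ==> e a b].

Fixpoint shelling (X : {set T}) (s : seq T) : bool :=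
  match s with
  | [::] => true
  | v :: s' => simplicial_in X v && shelling (v |: X) s'
  end.

Definition feasible (F : {set T}) : Prop :=
  exists s : seq T, shelling set0 s /\ [set x in s] = F.

(* X is free: its trace equals the full power set 2^X *)
Definition free_set (X : {set T}) : Prop :=
  forall Y : {set T}, Y \subset X -> exists F, feasible F /\ F :&: X = Y.

End SplitGraphs.

(* Main.v *)
Require Import Defs.
From mathcomp Require Import all_boot.

Lemma simplP (T : finType) (e : rel T) (X : {set T}) (v : T) :
  simplicial_in e X v <->
  (v \notin X /\ forall a b, a \notin X -> b \notin X -> a != b -> e v a -> e v b -> e a b).
Proof.
split.
- move=> /andP[vX /forallP H]; split=> // a b aX bX ab va vb.
  by move: (H a) => /forallP /(_ b) /implyP; apply; rewrite aX bX ab va vb.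
- move=> [vX H]; apply/andP; split=> //; apply/forallP=> a; apply/forallP=> b.
  by apply/implyP=> /and5P[aX bX ab va vb]; apply: H.
Qed.

Lemma I_simpl (T : finType) (e : rel T) (K X : {set T}) (v : T) :
  split_graph e K -> v \notin K -> v \notin X -> simplicial_in e X v.
Proof.
move=> [[sym irr] [cl ind]] vK vX; apply/simplP; split=> // a b aX bX ab va vb.
have aK : a \in K by apply/negPn/negP=> aK; move: (ind v a vK aK); rewrite va.
have bK : b \in K by apply/negPn/negP=> bK; move: (ind v b vK bK); rewrite vb.
exact: cl.
Qed.

Lemma K_simpl (T : finType) (e : rel T) (K X : {set T}) (k h : T) :
  split_graph e K -> k \in K -> k \notin X ->
  (forall i, i \notin K -> i \notin X -> e k i ->
     i = h /\ forall k', k' \in K -> k' \notin X -> k' != k -> e h k') ->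
  simplicial_in e X k.
Proof.
move=> [[sym irr] [cl ind]] kK kX H; apply/simplP; split=> // a b aX bX ab ka kb.
have ak : a != k by apply/eqP=> ak; move: ka; rewrite ak irr.
have bk : b != k by apply/eqP=> bk; move: kb; rewrite bk irr.
case: (boolP (a \in K)) => aK; case: (boolP (b \in K)) => bK.
- exact: cl.
- have [-> Hh] := H b bK bX kb; rewrite sym; exact: Hh.
- have [-> Hh] := H a aK aX ka; exact: Hh.
- have [ea _] := H a aK aX ka; have [eb _] := H b bK bX kb.
  by move: ab; rewrite ea eb eqxx.
Qed.

Lemma shelling_cat (T : finType) (e : rel T) (X : {set T}) (s1 s2 : seq T) :
  shelling e X (s1 ++ s2) =
  shelling e X s1 && shelling e (X :|: [set x in s1]) s2.
Proof.
elim: s1 X => [|v s1 IH] X /=.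
  have -> : X :|: [set x in [::]] = X by apply/setP=> x; rewrite !inE orbF.
  by [].
rewrite IH andbA; congr (_ && shelling _ _ _); apply/setP=> x; rewrite !inE.
by case: (x == v); case: (x \in X).
Qed.

Lemma shelling_suff (T : finType) (e : rel T) (X : {set T}) (s : seq T) :
  uniq s -> (forall v, v \in s -> v \notin X) ->
  (forall v (Y : {set T}), v \in s -> X \subset Y -> v \notin Y -> simplicial_in e Y v) ->
  shelling e X s.
Proof.
elim: s X => [|v s IH] X //= /andP[vs us] Hd Hs; apply/andP; split.
  by apply: Hs; rewrite ?mem_head ?subxx ?Hd ?mem_head.
apply: IH => //.
- move=> w ws; rewrite !inE negb_or Hd ?inE ?ws ?orbT // andbT.
  by apply/eqP=> wv; move: vs; rewrite -wv ws.
- move=> w Y ws sub wY; apply: Hs => //; first by rewrite inE ws orbT.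
  by apply: subset_trans sub; apply: subsetUr.
Qed.

Lemma shelling_prefix (T : finType) (e : rel T) (X : {set T}) (s : seq T) (v : T) :
  shelling e X s -> v \in s ->
  simplicial_in e (X :|: [set x in take (index v s) s]) v.
Proof.
move=> Hs vs; rewrite -(cat_take_drop (index v s) s) shelling_cat in Hs.
case/andP: Hs => _; rewrite (drop_nth v) ?index_mem // nth_index //=.
by case/andP.
Qed.

Lemma in_nbhd1 (T : finType) (e : rel T) (h v : T) :
  (v \in nbhd e [set h]) = (v != h) && e h v.
Proof.
rewrite inE in_set1; congr andb; apply/existsP/idP.
  by case=> x /andP[/set1P -> ].
by move=> H; exists h; rewrite in_set1 eqxx.
Qed.

Lemma setin_enum (T : finType) (A : {set T}) : [set x in enum A] = A.
Proof. by apply/setP=> x; rewrite inE mem_enum. Qed.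

Lemma build (T : finType) (e : rel T) (K A B1 B2 : {set T}) :
  split_graph e K -> A \subset ~: K -> B1 \subset K -> B2 \subset K ->
  [disjoint B1 & B2] ->
  (forall v (Y : {set T}), v \in B1 -> A \subset Y -> v \notin Y -> simplicial_in e Y v) ->
  (forall v (Y : {set T}), v \in B2 -> A :|: B1 \subset Y -> v \notin Y -> simplicial_in e Y v) ->
  feasible e (A :|: B1 :|: B2).
Proof.
move=> sg sA sB1 sB2 dB H1 H2.
exists (enum A ++ enum B1 ++ enum B2); split; last first.
  by apply/setP=> x; rewrite !inE !mem_cat !mem_enum orbA.
rewrite shelling_cat setin_enum set0U; apply/andP; split.
  apply: shelling_suff; first exact: enum_uniq.
    by move=> v; rewrite inE.
  move=> v Y; rewrite mem_enum => vA _ vY; apply: I_simpl sg _ vY.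
  by have := subsetP sA v vA; rewrite inE.
rewrite shelling_cat setin_enum; apply/andP; split.
  apply: shelling_suff; first exact: enum_uniq.
    move=> v; rewrite mem_enum => vB; apply/negP=> vA.
    by have := subsetP sA v vA; rewrite inE (subsetP sB1 v vB).
  by move=> v Y; rewrite mem_enum; apply: H1.
apply: shelling_suff; first exact: enum_uniq.
  move=> v; rewrite mem_enum => vB; rewrite inE negb_or; apply/andP; split.
    apply/negP=> vA.
    by have := subsetP sA v vA; rewrite inE (subsetP sB2 v vB).
  by apply/negP=> vB1; move: (disjointFr dB vB1); rewrite vB.
by move=> v Y; rewrite mem_enum; apply: H2.
Qed.

Lemma final_eq (T : finType) (K L J Y B1 : {set T}) :
  L \subset K -> J \subset ~: K -> Y \subset L :|: J -> [disjoint B1 & L :|: J] ->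
  (((~: K :\: J) :|: (Y :&: J)) :|: B1 :|: (Y :&: L)) :&: (L :|: J) = Y.
Proof.
move=> sL sJ sY dB; apply/setP=> x.
have h1 : (x \in L) ==> (x \in K) by apply/implyP/subsetP.
have h2 : (x \in J) ==> (x \notin K) by apply/implyP=> xJ; have := subsetP sJ x xJ; rewrite inE.
have h3 : (x \in Y) ==> ((x \in L) || (x \in J)) by apply/implyP=> xY; have := subsetP sY x xY; rewrite inE.
have h4 : (x \in B1) ==> ~~ ((x \in L) || (x \in J)).
  by apply/implyP=> xB; rewrite -in_setU (disjointFr dB xB).
rewrite !inE; move: h1 h2 h3 h4.
by case: (x \in L); case: (x \in J); case: (x \in K); case: (x \in Y); case: (x \in B1).
Qed.

Lemma disjointI (T : finType) (A B : {set T}) :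
  (forall x, x \in A -> x \in B -> False) -> [disjoint A & B].
Proof.
move=> H; rewrite disjoint_subset; apply/subsetP=> x xA; rewrite inE.
by apply/negP=> xB; exact: H x xA xB.
Qed.

Lemma seq_of (T : finType) (e : rel T) (L J : {set T}) (l : T) :
  free_set e (L :|: J) -> l \in L ->
  exists s, shelling e set0 s /\ l \in s /\
    forall x, x \in L :|: J -> x \in s -> x = l.
Proof.
move=> fr lL.
have sub : [set l] \subset L :|: J by rewrite sub1set inE lL.
have [F [[s [sh Fs]] FE]] := fr _ sub.
exists s; split=> //; split.
  have : l \in F :&: (L :|: J) by rewrite FE set11.
  by rewrite -Fs !inE => /andP[].
move=> x xLJ xs; apply/set1P; rewrite -FE inE xLJ andbT -Fs inE //.
Qed.

Arguments seq_of {T e L J l}.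
Arguments shelling_prefix {T e X s v}.
Arguments K_simpl {T e K X k} h.
Arguments I_simpl {T e K X v}.
Arguments build {T e K A B1 B2}.
Arguments final_eq {T K L J Y B1}.

Theorem mainTheorem15 (T : finType) (e : rel T) (K L J : {set T}) :
  split_graph e K ->
  L \subset K -> J \subset ~: K ->
  free_set e (L :|: J) <->
  ((forall l j, l \in L -> j \in J -> ~~ e l j) \/
   (exists2 h, h \in J &
      L \subset nbhd e [set h] /\
      nbhd e (J :\ h) \subset nbhd e [set h] :\: L)).
Proof.
move=> sg sL sJ; have [[sym irr] [cl ind]] := sg.
have inK x : x \in L -> x \in K := subsetP sL x.
have notK x : x \in J -> x \notin K.
  by move=> xJ; have := subsetP sJ x xJ; rewrite inE.
have neq x y : x \in K -> y \notin K -> x != y.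
  by move=> xK yK; apply/eqP=> xy; move: yK; rewrite -xy xK.
split.
- move=> fr.
  case: (boolP [exists l in L, exists j in J, e l j]); last first.
    move=> /existsPn H; left=> l j lL jJ; move: (H l); rewrite lL /=.
    by move=> /existsPn /(_ j); rewrite jJ.
  case/existsP=> l0 /andP[l0L /existsP[j0 /andP[j0J e0]]]; right; exists j0 => //.
  have out s l : (forall x, x \in L :|: J -> x \in s -> x = l) ->
      forall x, x \in L :|: J -> x != l ->
      x \notin (set0 :|: [set y in take (index l s) s]).
    move=> Hs x xLJ xl; rewrite set0U inE; apply/negP=> /mem_take xs.
    by move: xl; rewrite (Hs x xLJ xs) eqxx.
  have neq' x y : x \in K -> y \notin K -> y != x.
    by move=> xK yK; rewrite eq_sym; apply: neq.
  have inLJl x : x \in L -> x \in L :|: J by move=> xL; rewrite inE xL.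
  have inLJj x : x \in J -> x \in L :|: J by move=> xJ; rewrite inE xJ orbT.
  have ha l j j' : l \in L -> j \in J -> j' \in J -> e l j -> e l j' -> j = j'.
    move=> lL jJ j'J lj lj'; have [s [sh [ls Hs]]] := seq_of fr lL.
    have /simplP [_ H] := shelling_prefix sh ls.
    case: (eqVneq j j') => // jj'.
    have := H j j' (out _ _ Hs j (inLJj _ jJ) (neq' _ _ (inK _ lL) (notK _ jJ)))
      (out _ _ Hs j' (inLJj _ j'J) (neq' _ _ (inK _ lL) (notK _ j'J))) jj' lj lj'.
    by rewrite (negbTE (ind _ _ (notK _ jJ) (notK _ j'J))).
  have hb l' : l' \in L -> e j0 l'.
    move=> l'L; case: (eqVneq l' l0) => [->|ne]; first by rewrite sym.
    have [s [sh [ls Hs]]] := seq_of fr l0L.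
    have /simplP [_ H] := shelling_prefix sh ls.
    apply: H.
    - exact: out _ _ Hs j0 (inLJj _ j0J) (neq' _ _ (inK _ l0L) (notK _ j0J)).
    - exact: out _ _ Hs l' (inLJl _ l'L) ne.
    - exact: neq' _ _ (inK _ l'L) (notK _ j0J).
    - exact: e0.
    - by apply: cl; rewrite ?inK // eq_sym.
  split.
    apply/subsetP=> l lL; rewrite in_nbhd1 hb // andbT.
    exact: neq _ _ (inK _ lL) (notK _ j0J).
  apply/subsetP=> k; rewrite inE => /andP[_ /existsP[x /andP[xJh xk]]].
  move: xJh; rewrite !inE => /andP[xj0 xJ].
  have kK : k \in K.
    by apply/negPn/negP=> kK; move: (ind x k (notK x xJ) kK); rewrite xk.
  have kL : k \notin L.
    apply/negP=> kL; have := ha k j0 x kL j0J xJ ltac:(by rewrite sym hb) ltac:(by rewrite sym).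
    by move=> jx; move: xj0; rewrite jx eqxx.
  have kl0 : k != l0 by apply/eqP=> kl; move: kL; rewrite kl l0L.
  rewrite kL (neq _ _ kK (notK _ j0J)) /=; apply/existsP; exists j0; rewrite set11 /=.
  have [s [sh [ls Hs]]] := seq_of fr l0L.
  case: (boolP (k \in take (index l0 s) s)) => kt.
    have ks := mem_take kt.
    have /simplP [_ Hk] := shelling_prefix sh ks.
    have l0n : l0 \notin set0 :|: [set y in take (index k s) s].
      rewrite set0U inE; apply/negP=> /index_ltn h1; have := index_ltn kt.
      by move=> h2; have := ltn_trans h1 h2; rewrite ltnn.
    have xn : x \notin set0 :|: [set y in take (index k s) s].
      rewrite set0U inE; apply/negP=> /mem_take xs.
      have xl := Hs x (inLJj _ xJ) xs.
      by move: (notK _ xJ); rewrite xl inK.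
    have := Hk l0 x l0n xn (neq _ _ (inK _ l0L) (notK _ xJ))
      (cl k l0 kK (inK _ l0L) kl0) ltac:(by rewrite sym).
    move=> el0x; have := ha l0 j0 x l0L j0J xJ e0 el0x.
    by move=> jx; move: xj0; rewrite jx eqxx.
  have /simplP [_ Hl] := shelling_prefix sh ls.
  apply: Hl.
  - exact: out _ _ Hs j0 (inLJj _ j0J) (neq' _ _ (inK _ l0L) (notK _ j0J)).
  - by rewrite set0U inE.
  - exact: neq' _ _ kK (notK _ j0J).
  - exact: e0.
  - by apply: cl => //; [rewrite inK | rewrite eq_sym].
- move=> cond Y sY.
  set A := (~: K :\: J) :|: (Y :&: J).
  have sA : A \subset ~: K.
    apply/subsetP=> x; rewrite !inE => /orP[/andP[_ ->] //|/andP[_ xJ]].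
    exact: notK.
  have iJ (Y' : {set T}) i : A \subset Y' -> i \notin K -> i \notin Y' -> i \in J.
    move=> sub iK iY; apply/negPn/negP=> iJ; move: iY.
    by have -> : i \in Y' by apply: (subsetP sub); rewrite !inE iJ iK.
  have sYL : Y :&: L \subset K.
    by apply/subsetP=> x; rewrite inE => /andP[_ /inK].
  case: cond => [noedge | [h hJ [sLh sJh]]].
  + exists (A :|: set0 :|: (Y :&: L)); split; last first.
      by apply: final_eq => //; apply: disjointI => x; rewrite inE.
    apply: (build sg sA) => //.
    * exact: sub0set.
    * by apply: disjointI => x; rewrite inE.
    * by move=> v Y'; rewrite inE.
    * move=> v Y' vB sub vY; rewrite inE in vB; case/andP: vB => _ vL.
      apply: (K_simpl v sg (inK _ vL) vY) => i iK iY vi.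
      have sub' : A \subset Y' by apply: subset_trans sub; apply: subsetUl.
      have iJ' := iJ Y' i sub' iK iY.
      by move: (noedge v i vL iJ'); rewrite vi.
  + have vInNJ v i : v \in K -> i \in J -> i != h -> e v i -> v \in nbhd e (J :\ h).
      move=> vK iJ' ih vi; rewrite inE; apply/andP; split.
        rewrite !inE negb_and; apply/orP; right; apply/negP=> vJ.
        by move: (notK _ vJ); rewrite vK.
      by apply/existsP; exists i; rewrite !inE ih iJ' /= sym.
    exists (A :|: (K :\: nbhd e [set h]) :|: (Y :&: L)); split; last first.
      apply: final_eq => //; apply: disjointI => x /setDP[xK xN].
      case/setUP=> [xL|xJ].
        by move: xN; rewrite (subsetP sLh x xL).
      by move: (notK _ xJ); rewrite xK.
    apply: (build sg sA) => //.
    * exact: subsetDl.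
    * apply: disjointI => x /setDP[_ xN] /setIP[_ xL].
      by move: xN; rewrite (subsetP sLh x xL).
    * move=> v Y' vB sub vY; case/setDP: vB => vK vN.
      apply: (K_simpl v sg vK vY) => i iK iY vi.
      have iJ' := iJ Y' i sub iK iY.
      case: (eqVneq i h) => [ih|ih].
        move: vN; rewrite in_nbhd1 (neq _ _ vK (notK _ hJ)) /= sym -ih vi.
        by [].
      have := subsetP sJh v (vInNJ v i vK iJ' ih vi).
      by rewrite inE (negbTE vN) andbF.
    * move=> v Y' vB sub vY; rewrite inE in vB; case/andP: vB => _ vL.
      apply: (K_simpl h sg (inK _ vL) vY) => i iK iY vi.
      have sub' : A \subset Y' by apply: subset_trans sub; apply: subsetUl.
      have iJ' := iJ Y' i sub' iK iY.
      case: (eqVneq i h) => [ih|ih]; last first.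
        have := subsetP sJh v (vInNJ v i (inK _ vL) iJ' ih vi).
        by rewrite inE vL.
      split=> // k' k'K k'Y _.
      have k'B : k' \notin K :\: nbhd e [set h].
        apply/negP=> k'B; move: k'Y.
        by have -> : k' \in Y' by apply: (subsetP sub); rewrite inE k'B orbT.
      move: k'B; rewrite inE k'K andbT negbK in_nbhd1.
      by case/andP.
Qed.
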